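(* Let $n\ge 3$ and $\varphi$ a linear functional with $\varphi(e_i)=a_i$, $0<a_1<\dots<a_n$. Every $\varphi$-monotone path on $\diamond^n$ is at distance at most $n-2$ in the flip graph from some coherent monotone path, and this bound is attained (e.g. by the path with vertices $-e_n,-e_{n-1},\dots,-e_1,e_2,\dots,e_{n-1},e_n$).
   Context: $\diamond^n=\mathrm{conv}\{\pm e_1,\dots,\pm e_n\}$. A monotone path is a sequence of vertices $-e_n=v_0,\dots,v_m=e_n$ with $v_{j-1}\neq -v_j$ and $\varphi(v_{j-1})<\varphi(v_j)$. The flip graph has the monotone paths as vertices, two being adjacent when one is obtained from the other by inserting or deleting a single vertex. A monotone path is coherent if there is a linear functional $\psi$ such that for $\pi=(\varphi,\psi):\mathbb{R}^n\to\mathbb{R}^2$ the images $\pi(v_0),\dots,\pi(v_m)$ are exactly the lower vertices of the polygon $\pi(\diamond^n)$ in order and each edge $[v_{j-1},v_j]$ is the preimage in $\diamond^n$ of a lower edge; for $\diamond^n$ this holds exactly when the path contains no antipodal pair other than $\{-e_n,e_n\}$. *)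

(* Defs.v *)
From mathcomp Require Import all_boot all_order all_algebra.
From mathcomp Require Export reals.
Set Implicit Arguments. Unset Strict Implicit. Unset Printing Implicit Defensive.
Import Order.TTheory GRing.Theory Num.Theory.
Local Open Scope ring_scope.

(* A vertex of the cross-polytope diamond^n: (true, i) is e_i, (false, i) is -e_i,
   with 1-based indices 1 <= i <= n. *)
Definition vert := (bool * nat)%type.

Definition valid (n : nat) (v : vert) : bool := (1 <= v.2 <= n)%N.

Definition lin {R : realType} (c : nat -> R) (v : vert) : R :=
  if v.1 then c v.2 else - c v.2.

Definition antipodal (v w : vert) : bool := (v.2 == w.2) && (v.1 != w.1).

Definition mono_step {R : realType} (a : nat -> R) (v w : vert) : bool :=
  ~~ antipodal v w && (lin a v < lin a w).

Definition monotone_path {R : realType} (n : nat) (a : nat -> R) (p : seq vert) : Prop :=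
  exists rest, p = (false, n) :: rest /\ last (false, n) rest = (true, n) /\
    all (valid n) p /\ path (mono_step a) (false, n) rest.

Definition flip_adj (p q : seq vert) : Prop :=
  exists s1 s2 x, (p = s1 ++ s2 /\ q = s1 ++ x :: s2) \/
                  (p = s1 ++ x :: s2 /\ q = s1 ++ s2).

Fixpoint flip_within {R : realType} (n : nat) (a : nat -> R) (k : nat) (p q : seq vert) : Prop :=
  match k with
  | 0 => p = q
  | k'.+1 => flip_within n a k' p q \/
       exists r, monotone_path n a r /\ flip_adj p r /\ flip_within n a k' r q
  end.

(* [v,w] is the preimage in diamond^n of a lower edge of pi(diamond^n),
   pi = (phi, psi): the face of diamond^n minimizing psi + c*phi has vertex set {v,w}. *)
Definition lower_edge_preimage {R : realType} (n : nat) (a psi : nat -> R) (c : R)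
  (v w : vert) : Prop :=
  let f := fun u => lin psi u + c * lin a u in
  f v = f w /\ forall u, valid n u -> f v <= f u /\ (f u <= f v -> u = v \/ u = w).

Definition coherent {R : realType} (n : nat) (a : nat -> R) (p : seq vert) : Prop :=
  exists psi : nat -> R, forall j, (j.+1 < size p)%N ->
    exists c : R, lower_edge_preimage n a psi c (nth (false, 0%N) p j) (nth (false, 0%N) p j.+1).

Definition extremal_path (n : nat) : seq vert :=
  [seq (false, (n - i)%N) | i <- iota 0 n] ++ [seq (true, i) | i <- iota 2 (n - 1)].

(* Main.v *)
Require Import Defs.
From mathcomp Require Import all_boot all_order all_algebra.
From mathcomp Require Import reals ring lra zify.
Import Order.TTheory GRing.Theory Num.Theory.
Local Open Scope ring_scope.
Set Implicit Arguments. Unset Strict Implicit. Unset Printing Implicit Defensive.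

Lemma a_lt (R : realType) (n : nat) (a : nat -> R) :
  (forall i, (1 <= i < n)%N -> a i < a i.+1) ->
  forall i j, (1 <= i)%N -> (i < j)%N -> (j <= n)%N -> a i < a j.
Proof.
move=> Ha i; elim=> [|j IH] // i1 ij jn.
have [->|ne] := eqVneq i j; first by apply: Ha; lia.
apply: lt_trans (IH i1 _ _) (Ha j _); lia.
Qed.

Lemma a_pos (R : realType) (n : nat) (a : nat -> R) :
  0 < a 1%N -> (forall i, (1 <= i < n)%N -> a i < a i.+1) ->
  forall i, (1 <= i <= n)%N -> 0 < a i.
Proof.
move=> a1 Ha i /andP[i1 iN].
have [->|ne] := eqVneq i 1%N => //.
apply: (lt_trans a1); apply: (a_lt Ha); lia.
Qed.

Lemma split_first (T : eqType) (x : T) (p : seq T) :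
  x \in p -> exists s1 s2, p = s1 ++ x :: s2 /\ x \notin s1.
Proof.
elim: p => [|y p IH] //; rewrite inE.
have [->|ne] := eqVneq x y => /= H; first by exists [::], p.
have [s1 [s2 [-> ns1]]] := IH H.
by exists (y :: s1), s2; rewrite inE negb_or ne.
Qed.

Lemma rem_split (T : eqType) (x : T) s1 s2 :
  x \notin s1 -> rem x (s1 ++ x :: s2) = s1 ++ s2.
Proof.
elim: s1 => [|y s1 IH] /=; first by rewrite eqxx.
rewrite inE negb_or => /andP[ne ns]; rewrite eq_sym (negbTE ne) IH //.
Qed.

Definition ltv (R : realType) (a : nat -> R) (u v : vert) := lin a u < lin a v.

Lemma ltv_trans (R : realType) (a : nat -> R) : transitive (ltv a).
Proof. by move=> y x z; rewrite /ltv; apply: lt_trans. Qed.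

Lemma mono_sorted (R : realType) n (a : nat -> R) p :
  monotone_path n a p -> sorted (ltv a) p.
Proof.
case=> rest [-> [_ [_ P]]] /=.
by apply: sub_path P => u v /andP[].
Qed.

Lemma mono_uniq (R : realType) n (a : nat -> R) p :
  monotone_path n a p -> uniq p.
Proof.
move/mono_sorted; apply: sorted_uniq; first exact: ltv_trans.
by move=> u; rewrite /ltv ltxx.
Qed.

Lemma mono_pairwise (R : realType) n (a : nat -> R) p :
  monotone_path n a p -> pairwise (ltv a) p.
Proof. by move/mono_sorted; rewrite sorted_pairwise //; apply: ltv_trans. Qed.

Lemma mono_consec (R : realType) n (a : nat -> R) p j x0 :
  monotone_path n a p -> (j.+1 < size p)%N ->
  mono_step a (nth x0 p j) (nth x0 p j.+1).
Proof.
case=> rest [-> [_ [_ P]]] /= H.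
by move/(pathP x0): P => /(_ j H).
Qed.

Lemma lin_anti (R : realType) (a : nat -> R) u w :
  antipodal u w -> lin a u = - lin a w.
Proof.
case: u w => [b i] [c j] /andP[/= /eqP <- ne].
by case: b c ne => [] [] //= _; rewrite opprK.
Qed.

Lemma valid_bounds (R : realType) n (a : nat -> R) u :
  0 < a 1%N -> (forall i, (1 <= i < n)%N -> a i < a i.+1) -> valid n u ->
  a 1%N <= `|lin a u| <= a n.
Proof.
move=> a1 Ha; case: u => [b i] /andP[/= i1 iN].
have P := a_pos a1 Ha (i := i).
have le1 : a 1%N <= a i.
  have [->|lt] : i = 1%N \/ (1 < i)%N by lia.
    by [].
  by apply/ltW/(a_lt Ha); lia.
have len : a i <= a n.
  have [->|lt] : i = n \/ (i < n)%N by lia.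
    by [].
  by apply/ltW/(a_lt Ha); lia.
rewrite /lin; case: b => /=; rewrite ?normrN gtr0_norm ?le1 ?len //; apply: P; lia.
Qed.

Lemma mono_valid (R : realType) n (a : nat -> R) p :
  monotone_path n a p -> all (valid n) p.
Proof. by case=> rest [_ [_ [V _]]]. Qed.

Lemma sorted_nth_lt (R : realType) (a : nat -> R) p x0 i j :
  sorted (ltv a) p -> (i < j)%N -> (j < size p)%N ->
  lin a (nth x0 p i) < lin a (nth x0 p j).
Proof.
move=> S ij js.
have := sorted_ltn_nth (@ltv_trans R a) x0 S i j; rewrite !inE.
by apply => //; apply: ltn_trans ij js.
Qed.

Lemma one_not_both (R : realType) n (a : nat -> R) p :
  0 < a 1%N -> (forall i, (1 <= i < n)%N -> a i < a i.+1) ->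
  monotone_path n a p -> ~~ (((false, 1%N) \in p) && ((true, 1%N) \in p)).
Proof.
move=> a1 Ha M; apply/negP => /andP[f t].
have S := mono_sorted M; have V := mono_valid M.
set x0 : vert := (false, 0%N).
set k := index (false, 1%N) p; set t' := index (true, 1%N) p.
have kS : (k < size p)%N by rewrite index_mem.
have tS : (t' < size p)%N by rewrite index_mem.
have nk : nth x0 p k = (false, 1%N) by rewrite nth_index.
have nt : nth x0 p t' = (true, 1%N) by rewrite nth_index.
have kt : (k < t')%N.
  case: (ltngtP k t') => // [lt|eq].
    have := sorted_nth_lt x0 S lt kS; rewrite nk nt /= => H.
    have : 0 < a 1%N - - a 1%N by rewrite opprK; apply: addr_gt0.
    by rewrite subr_gt0 lt_gtF.
  by move: nt; rewrite -eq nk.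
have k1 : (k.+1 < size p)%N by apply: leq_ltn_trans kt tS.
have Hw := mono_consec x0 M k1; rewrite nk in Hw.
set w := nth x0 p k.+1 in Hw.
have lw : lin a w < a 1%N.
  have [e|ne] := eqVneq k.+1 t'.
    by move: Hw; rewrite /w e nt /mono_step /antipodal /=.
  have lt : (k.+1 < t')%N by rewrite ltn_neqAle ne kt.
  by have := sorted_nth_lt x0 S lt tS; rewrite nt.
have wv : valid n w by apply: (allP V); rewrite mem_nth.
have := valid_bounds a1 Ha wv.
move: Hw => /andP[_ H2].
have : `|lin a w| < a 1%N by rewrite ltr_norml lw andbT.
by move=> H /andP[H3 _]; move: (lt_le_trans H H3); rewrite ltxx.
Qed.

Lemma del_mono (R : realType) n (a : nat -> R) p i :
  0 < a 1%N -> (forall i, (1 <= i < n)%N -> a i < a i.+1) ->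
  monotone_path n a p -> (1 <= i < n)%N ->
  (false, i) \in p -> (true, i) \in p -> monotone_path n a (rem (false, i) p).
Proof.
move=> a1 Ha M iN f t.
have PW := mono_pairwise M.
have ai : 0 < a i by apply: (a_pos a1 Ha); lia.
have [s1 [s2 [E ns1]]] := split_first f.
rewrite E rem_split //.
case: M => rest [Ep [L [V P]]].
case: s1 E ns1 => [|y s1'] E ns1.
  by move: Ep; rewrite E => -[] en; move: iN; rewrite en ltnn andbF.
move: Ep; rewrite E => -[ey er].
have ts2 : (true, i) \in s2.
  move: t; rewrite E mem_cat => /orP[ts1|].
    move: PW; rewrite E pairwise_cat => /and3P[/allrelP H _ _].
    have := H _ _ ts1 (mem_head _ _); rewrite /ltv /= => H2.
    move: H2; rewrite /lin /= => H2; exfalso; lra.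
  by rewrite inE.
case: s2 E er ts2 => [|w s2'] // E er ts2.
have lw : lin a w <= a i.
  move: ts2; rewrite inE => /orP[/eqP <- //|ts2].
  move: PW; rewrite E pairwise_cat => /and3P[_ _].
  rewrite /= => /andP[_ /andP[/allP /(_ _ ts2) H _]].
  exact: ltW.
rewrite -er cat_path in P; case/andP: P => P1 /= /and3P[eux exw Pw].
exists (s1' ++ w :: s2'); split; first by rewrite ey.
split; first by move: L; rewrite -er !last_cat.
split.
  by move: V; rewrite E /= !all_cat /= => /and3P[-> -> /and3P[_ -> ->]].
rewrite cat_path P1 /= Pw andbT.
set u := last (false, n) s1' in eux *.
case/andP: eux => _ lux; case/andP: exw => _ lxw.
rewrite /mono_step (lt_trans lux lxw) andbT.
apply/negP => /(lin_anti a) H.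
move: lux; rewrite H /= => H2.
move: H2; rewrite {2}/lin /= => H2; lra.
Qed.

Definition both (p : seq vert) (i : nat) := ((false, i) \in p) && ((true, i) \in p).

Lemma fw_succ (R : realType) n (a : nat -> R) k p q :
  flip_within n a k p q -> flip_within n a k.+1 p q.
Proof. by move=> H; left. Qed.

Lemma fw_weak (R : realType) n (a : nat -> R) k d p q :
  flip_within n a k p q -> flip_within n a (k + d) p q.
Proof.
move=> H; elim: d => [|d IH]; first by rewrite addn0.
by rewrite addnS; apply: fw_succ.
Qed.

Lemma flip_rem (p : seq vert) x : x \in p -> flip_adj p (rem x p).
Proof.
move=> /split_first [s1 [s2 [E ns]]]; rewrite E rem_split //.
by exists s1, s2, x; right.
Qed.

Lemma process (R : realType) n (a : nat -> R) :
  0 < a 1%N -> (forall i, (1 <= i < n)%N -> a i < a i.+1) ->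
  forall (L : seq nat) p, monotone_path n a p -> (forall i, i \in L -> (1 <= i < n)%N) ->
  exists q, [/\ monotone_path n a q, flip_within n a (size L) p q,
     (forall i, i \in L -> ~~ both q i) & (forall j, both q j -> both p j)].
Proof.
move=> a1 Ha; elim=> [|i L IH] p M HL.
  by exists p; split.
have HL' : forall j, j \in L -> (1 <= j < n)%N.
  by move=> j jL; apply: HL; rewrite inE jL orbT.
have Hi : (1 <= i < n)%N by apply: HL; rewrite mem_head.
case B: (both p i).
  move: (B) => /andP[f t].
  have M1 := del_mono a1 Ha M Hi f t.
  have [q [Mq Fq Nq Bq]] := IH _ M1 HL'.
  have U := mono_uniq M.
  exists q; split => //.
  - by right; exists (rem (false, i) p); split => //; split => //; apply: flip_rem.
  - move=> j; rewrite inE => /orP[/eqP ->|jL]; last exact: Nq.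
    apply/negP => /Bq /andP[]; by rewrite mem_rem_uniqF.
  - move=> j /Bq /andP[f1 t1]; apply/andP; split; exact: (mem_rem f1) || exact: (mem_rem t1).
have [q [Mq Fq Nq Bq]] := IH _ M HL'.
exists q; split => //.
- exact: fw_succ.
- move=> j; rewrite inE => /orP[/eqP ->|jL]; last exact: Nq.
  by apply/negP => /Bq; rewrite B.
Qed.

Lemma lin_ext (R : realType) n (a : nat -> R) u :
  0 < a 1%N -> (forall i, (1 <= i < n)%N -> a i < a i.+1) -> valid n u ->
  (lin a u = a n -> u = (true, n)) /\ (lin a u = - a n -> u = (false, n)).
Proof.
move=> a1 Ha; case: u => [b m] /andP[/= m1 mn].
have am : 0 < a m by apply: (a_pos a1 Ha); lia.
have [e|lt] : m = n \/ (m < n)%N by lia.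
  subst m.
  by case: b; rewrite /lin /=; split => // H; exfalso; lra.
have H := a_lt Ha m1 lt (leqnn n).
by case: b; rewrite /lin /=; split => E; exfalso; lra.
Qed.

Lemma pos_E (R : realType) (A xv xw xu : R) :
  0 < A -> - A <= xv -> xv < xw -> xw <= A -> - A < xu -> xu < A ->
  (- A < xv \/ xw < A) -> 0 < A ^+ 2 + xv * xw - (xv + xw) * xu.
Proof.
move=> A0 h1 h2 h3 h4 h5 h6.
have E : 2%:R * A * (A ^+ 2 + xv * xw - (xv + xw) * xu) =
   (A - xu) * ((A + xv) * (A + xw)) + (A + xu) * ((A - xv) * (A - xw)) by ring.
have P : 0 < (A - xu) * ((A + xv) * (A + xw)) + (A + xu) * ((A - xv) * (A - xw)).
  case: h6 => h6.
    apply: ltr_pwDl; first by apply: mulr_gt0; [lra | apply: mulr_gt0; lra].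
    by apply: mulr_ge0; [lra | apply: mulr_ge0; lra].
  apply: ltr_pwDr; first by apply: mulr_gt0; [lra | apply: mulr_gt0; lra].
  by apply: mulr_ge0; [lra | apply: mulr_ge0; lra].
rewrite -E in P.
by move: P; rewrite pmulr_rgt0 //; apply: mulr_gt0; lra.
Qed.

Lemma make_coherent (R : realType) n (a : nat -> R) q :
  0 < a 1%N -> (forall i, (1 <= i < n)%N -> a i < a i.+1) ->
  monotone_path n a q -> (forall i, (1 <= i < n)%N -> ~~ both q i) ->
  coherent n a q.
Proof.
move=> a1 Ha M NB.
set A := a n.
have n1 : (1 <= n)%N by case: (M) => rest [E _]; move: (mono_valid M); rewrite E /= => /andP[/andP[]].
have A0 : 0 < A by apply: (a_pos a1 Ha); rewrite n1 leqnn.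
have fn : (false, n) \in q by case: (M) => rest [-> _]; rewrite mem_head.
have tn : (true, n) \in q.
  by case: (M) => rest [-> [L _]]; rewrite -L mem_last.
have V := mono_valid M; have S := mono_sorted M.
pose psi i := if (true, i) \in q then a i ^+ 2 - A ^+ 2
              else if (false, i) \in q then A ^+ 2 - a i ^+ 2 else 0.
have F1 : forall u, u \in q -> lin psi u = lin a u ^+ 2 - A ^+ 2.
  case=> [[] i] uq; rewrite /lin /psi /=.
    by rewrite uq.
  case: ifP => t; last by rewrite uq opprB sqrrN.
  have vi : valid n (false, i) by apply: (allP V).
  have ein : i = n.
    move: vi => /andP[/= i1 iN].
    have [//|lt] : i = n \/ (i < n)%N by lia.
    by move: (NB i); rewrite /both uq t i1 lt => /(_ isT).
  by rewrite ein /A subrr oppr0 sqrrN subrr.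
have F2 : forall u, valid n u -> u \notin q -> 0 <= lin psi u /\ `|lin a u| < A.
  case=> [b i] vu uq.
  have iN : (i < n)%N.
    move: vu => /andP[/= i1 iN].
    have [e|//] : i = n \/ (i < n)%N by lia.
    by subst i; case: b uq; rewrite ?fn ?tn.
  have i1 : (1 <= i)%N by move: vu => /andP[].
  have ai : 0 < a i by apply: (a_pos a1 Ha); lia.
  have aiA : a i < A by apply: (a_lt Ha) => //.
  have sq : a i ^+ 2 <= A ^+ 2 by rewrite ler_sqr ?ltW //; apply: ltW.
  split; last by case: b {uq vu}; rewrite /lin /= ?normrN gtr0_norm.
  case: b uq vu => uq _; rewrite /lin /psi /=.
    rewrite (negbTE uq); case: ifP => _; rewrite ?subr_ge0 //.
  case: ifP => _; first by rewrite opprB subr_ge0.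
  by rewrite (negbTE uq) oppr0.
exists psi => j js.
set x0 : vert := (false, 0%N).
set v := nth x0 q j; set w := nth x0 q j.+1.
have vq : v \in q by rewrite mem_nth // ltnW.
have wq : w \in q by rewrite mem_nth.
have vw : lin a v < lin a w by apply: sorted_nth_lt.
have Hvw := mono_consec x0 M js; rewrite -/v -/w in Hvw.
have bv := valid_bounds a1 Ha (allP V _ vq).
have bw := valid_bounds a1 Ha (allP V _ wq).
exists (- (lin a v + lin a w)).
rewrite /lower_edge_preimage.
have key : forall u, u \in q ->
  (lin psi u + - (lin a v + lin a w) * lin a u) -
  (lin psi v + - (lin a v + lin a w) * lin a v) = (lin a u - lin a v) * (lin a u - lin a w).
  by move=> u uq; rewrite F1 // F1 //; ring.
split.
  by apply/eqP; rewrite eq_sym -subr_eq0 key // subrr mulr0.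
move=> u uv.
case uq: (u \in q).
  set k := index u q.
  have ks : (k < size q)%N by rewrite index_mem.
  have uk : nth x0 q k = u by rewrite nth_index.
  have [lt|ge] := ltnP k j.
    have h1 : lin a u < lin a v by rewrite -uk; apply: sorted_nth_lt => //; apply: ltnW.
    have h2 : 0 < (lin a u - lin a v) * (lin a u - lin a w).
      by rewrite nmulr_rgt0 ?subr_lt0 // (lt_trans h1 vw).
    rewrite -subr_ge0 key //; split; first exact: ltW.
    by rewrite -subr_ge0 -opprB key // oppr_ge0 leNgt h2.
  have [eq|gt] := eqVneq k j.
    have -> : u = v by rewrite -uk eq.
    by split => //; left.
  have [eq2|gt2] := eqVneq k j.+1.
    have -> : u = w by rewrite -uk eq2.
    by split; [rewrite -subr_ge0 key // subrr mulr0 | right].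
  have lt2 : (j.+1 < k)%N by rewrite ltn_neqAle eq_sym gt2 /= ltn_neqAle eq_sym gt ge.
  have h1 : lin a w < lin a u by rewrite -uk; apply: sorted_nth_lt.
  have h2 : 0 < (lin a u - lin a v) * (lin a u - lin a w).
    apply: mulr_gt0; rewrite subr_gt0 //; exact: lt_trans vw h1.
  rewrite -subr_ge0 key //; split; first exact: ltW.
  by rewrite -subr_ge0 -opprB key // oppr_ge0 leNgt h2.
have [y0 xu] := F2 u uv (negbT uq).
have ext : - A < lin a v \/ lin a w < A.
  have [ev|ev] := eqVneq (lin a v) (- A); last first.
    left; move: bv; rewrite ler_norml => /andP[_ /andP[h _]].
    by rewrite lt_neqAle eq_sym ev h.
  have [ew|ew] := eqVneq (lin a w) A; last first.
    right; move: bw; rewrite ler_norml => /andP[_ /andP[_ h]].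
    by rewrite lt_neqAle ew h.
  have ev' := (lin_ext a1 Ha (allP V _ vq)).2 ev.
  have ew' := (lin_ext a1 Ha (allP V _ wq)).1 ew.
  by exfalso; move: Hvw; rewrite ev' ew' /mono_step /antipodal /= eqxx.
move: bv bw xu; rewrite !ler_norml ltr_norml => /andP[_ /andP[hv1 hv2]] /andP[_ /andP[hw1 hw2]] /andP[hu1 hu2].
have P := pos_E A0 hv1 vw hw2 hu1 hu2 ext.
have D : (lin psi u + - (lin a v + lin a w) * lin a u) -
  (lin psi v + - (lin a v + lin a w) * lin a v) =
  lin psi u + (A ^+ 2 + lin a v * lin a w - (lin a v + lin a w) * lin a u).
  by rewrite (F1 v vq); ring.
split.
  by rewrite -subr_ge0 D; apply: addr_ge0 => //; apply: ltW.
rewrite -subr_ge0 -opprB D oppr_ge0 => H.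
have : 0 < lin psi u + (A ^+ 2 + lin a v * lin a w - (lin a v + lin a w) * lin a u).
  exact: ltr_wpDl.
by rewrite ltNge H.
Qed.

Definition mu (n : nat) (p : seq vert) := count (both p) (iota 2 (n - 2)).

Lemma mu_flip (p r : seq vert) n : flip_adj p r -> (mu n p <= (mu n r).+1)%N.
Proof.
case=> s1 [s2 [x [[-> ->]|[-> ->]]]].
  apply: leq_trans (leqnSn _); apply: sub_count => i.
  by rewrite /both !mem_cat !inE => /andP[/orP[->|->] /orP[->|->]]; rewrite ?orbT.
have H : subpred (both (s1 ++ x :: s2)) (predU (both (s1 ++ s2)) (pred1 x.2)).
  move=> i; rewrite /both /= !mem_cat !inE.
  have [->|ne] := eqVneq i x.2; first by rewrite orbT.
  have n1 : ((false, i) == x) = false by apply/negbTE; apply: contra ne => /eqP <-.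
  have n2 : ((true, i) == x) = false by apply/negbTE; apply: contra ne => /eqP <-.
  by rewrite n1 n2 /= orbF.
rewrite /mu; apply: leq_trans (sub_count H _) _.
have L := count_predUI (both (s1 ++ s2)) (pred1 x.2) (iota 2 (n - 2)).
have C : (count (pred1 x.2) (iota 2 (n - 2)) <= 1)%N.
  by have := count_uniq_mem x.2 (iota_uniq 2 (n - 2)); rewrite /= => ->; case: (_ \in _).
move: L C; set A1 := count _ _; set A2 := count _ _; set A3 := count _ _; set A4 := count _ _. clearbody A1 A2 A3 A4; lia.
Qed.

Lemma mu_fw (R : realType) n (a : nat -> R) k p q :
  flip_within n a k p q -> (mu n p <= mu n q + k)%N.
Proof.
elim: k p => [|k IH] p /=; first by move=> ->; rewrite addn0.
case=> [/IH H|[r [_ [F W]]]]; first by rewrite addnS ltnW.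
have := mu_flip n F; have := IH _ W; rewrite addnS; lia.
Qed.

Lemma coh_vertex (R : realType) n (a : nat -> R) q psi z :
  monotone_path n a q ->
  (forall j, (j.+1 < size q)%N -> exists c : R,
     lower_edge_preimage n a psi c (nth (false, 0%N) q j) (nth (false, 0%N) q j.+1)) ->
  z \in q -> exists c v w, (z = v \/ z = w) /\ lower_edge_preimage n a psi c v w.
Proof.
move=> M H zq.
have s2 : (1 < size q)%N.
  case: M => rest [-> [L _]] /=; case: rest L => //.
set k := index z q.
have ks : (k < size q)%N by rewrite index_mem.
have zk : nth (false, 0%N) q k = z by rewrite nth_index.
have [lt|ge] := ltnP k.+1 (size q).
  have [c Hc] := H k lt; exists c; do 2 eexists; split; last exact: Hc.
  by left.
have kp : k = (k.-1).+1 by lia.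
have kl : (k.-1.+1 < size q)%N by rewrite -kp.
have [c Hc] := H k.-1 kl.
exists c; do 2 eexists; split; last exact: Hc.
by right; rewrite -kp.
Qed.

Lemma lep_vertex (R : realType) n (a psi : nat -> R) c v w z :
  (z = v \/ z = w) -> lower_edge_preimage n a psi c v w ->
  (forall u, valid n u -> lin psi z + c * lin a z <= lin psi u + c * lin a u) /\
  (forall u, valid n u -> lin psi u + c * lin a u <= lin psi z + c * lin a z -> u = v \/ u = w).
Proof.
rewrite /lower_edge_preimage /= => zv [E H].
have Ez : lin psi z + c * lin a z = lin psi v + c * lin a v.
  by case: zv => ->.
rewrite Ez; split => u vu; [exact: (H u vu).1 | exact: (H u vu).2].
Qed.

Lemma coh_not_both (R : realType) n (a : nat -> R) q i :
  0 < a 1%N -> (forall i, (1 <= i < n)%N -> a i < a i.+1) ->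
  monotone_path n a q -> coherent n a q -> (1 <= i < n)%N -> ~~ both q i.
Proof.
move=> a1 Ha M [psi H] iN; apply/negP => /andP[fq tq].
have ai : 0 < a i by apply: (a_pos a1 Ha); lia.
have an : a i < a n by apply: (a_lt Ha); lia.
have vfi : valid n (false, i) by rewrite /valid /=; lia.
have vti : valid n (true, i) by rewrite /valid /=; lia.
have vfn : valid n (false, n) by rewrite /valid /=; lia.
have vtn : valid n (true, n) by rewrite /valid /=; lia.
have [c [v [w [zF Evw]]]] := coh_vertex M H fq.
have [c' [v' [w' [zT Evw']]]] := coh_vertex M H tq.
have [minF Hm] := lep_vertex zF Evw.
have [minT _] := lep_vertex zT Evw'.
have h1 := minF _ vtn; have h2 := minF _ vfn.
have h3 := minT _ vtn; have h4 := minT _ vfn.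
move: h1 h2 h3 h4; rewrite /lin /= => h1 h2 h3 h4.
have d1 : (c' - c) * (a i + a n) <= 0 by lra.
have d2 : (c' - c) * (a n - a i) >= 0 by lra.
have e1 : c' - c <= 0 by move: d1; rewrite pmulr_lle0 //; lra.
have e2 : c' - c >= 0 by move: d2; rewrite pmulr_lge0 //; lra.
have cc : c' = c by lra.
subst c'.
have G : psi i + c * a i = 0 by lra.
have Hn : psi n + c * a n = 0 by lra.
have fz : lin psi (false, i) + c * lin a (false, i) = 0 by rewrite /lin /=; lra.
have mem : forall u, valid n u -> lin psi u + c * lin a u = 0 -> u = v \/ u = w.
  by move=> u vu e; apply: (Hm u vu); rewrite e fz.
have m1 : (true, i) = v \/ (true, i) = w by apply: mem => //; rewrite /lin /=; lra.
have m2 : (true, n) = v \/ (true, n) = w by apply: mem => //; rewrite /lin /=; lra.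
have m3 : (false, n) = v \/ (false, n) = w by apply: mem => //; rewrite /lin /=; lra.
have ni : i != n by rewrite neq_ltn; case/andP: iN => _ ->.
have ni' : i <> n by move=> e; move: ni; rewrite e eqxx.
by case: m1 => e1'; case: m2 => e2'; case: m3 => e3'; congruence.
Qed.

Lemma path_map_iota (T : Type) (e : rel T) (f : nat -> T) k : forall x m,
  ((0 < k)%N -> e x (f m)) ->
  (forall i, (m <= i)%N -> (i.+1 < m + k)%N -> e (f i) (f i.+1)) ->
  path e x (map f (iota m k)).
Proof.
elim: k => [|k IH] x m H0 Hs //=.
rewrite H0 //=; apply: IH.
  by move=> k0; apply: Hs => //; lia.
by move=> i mi ik; apply: Hs; lia.
Qed.

Lemma last_map_iota (T : Type) (f : nat -> T) k : forall x m,
  last x (map f (iota m k.+1)) = f (m + k)%N.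
Proof.
elim: k => [|k IH] x m /=; first by rewrite addn0.
by move: (IH (f m) m.+1) => /= ->; rewrite addSnnS.
Qed.

Lemma extremal_mono (R : realType) n (a : nat -> R) :
  (3 <= n)%N -> 0 < a 1%N -> (forall i, (1 <= i < n)%N -> a i < a i.+1) ->
  monotone_path n a (extremal_path n).
Proof.
case: n => [//|m] m3 a1 Ha.
have ap := a_pos a1 Ha.
rewrite /extremal_path /= subn0 subn1 /=.
set L1 := [seq (false, (m.+1 - i)%N) | i <- iota 1 m].
set L2 := [seq (true, i) | i <- iota 2 m].
have [k mk] : exists k, m = k.+1 by exists m.-1; lia.
exists (L1 ++ L2); split => //; split.
  by rewrite last_cat /L2 mk last_map_iota.
split.
  rewrite /= all_cat; apply/and3P; split.
  - by rewrite /valid /=; lia.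
  - by apply/allP => v /mapP [i]; rewrite mem_iota => Hi ->; rewrite /valid /=; lia.
  - by apply/allP => v /mapP [i]; rewrite mem_iota => Hi ->; rewrite /valid /=; lia.
rewrite cat_path; apply/andP; split.
  apply: path_map_iota.
    move=> _; rewrite /mono_step /antipodal /= andbF /= /lin /=.
    rewrite subn1 /= ltrN2; apply: Ha; lia.
  move=> i i1 im; rewrite /mono_step /antipodal /= andbF /= /lin /= ltrN2.
  have -> : (m.+1 - i = (m - i).+1)%N by lia.
  apply: Ha; lia.
have -> : last (false, m.+1) L1 = (false, 1%N).
  by rewrite /L1 mk last_map_iota; congr (_, _); lia.
apply: path_map_iota.
  move=> _; rewrite /mono_step /antipodal /= /lin /=.
  have h2 : a 1%N < a 2 by apply: Ha; lia.
  lra.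
move=> i i2 im; rewrite /mono_step /antipodal /= andbF /= /lin /=.
apply: Ha; lia.
Qed.

Theorem theorem1p1 (R : realType) (n : nat) (a : nat -> R) :
  (3 <= n)%N -> 0 < a 1%N -> (forall i, (1 <= i < n)%N -> a i < a i.+1) ->
  (forall p, monotone_path n a p ->
     exists q, monotone_path n a q /\ coherent n a q /\ flip_within n a (n - 2) p q) /\
  (monotone_path n a (extremal_path n) /\
   forall q k, monotone_path n a q -> coherent n a q ->
     flip_within n a k (extremal_path n) q -> (n - 2 <= k)%N).
Proof.
move=> n3 a1 Ha; split.
  move=> p M.
  have HL : forall i, i \in iota 2 (n - 2) -> (1 <= i < n)%N.
    by move=> i; rewrite mem_iota; lia.
  have [q [Mq Fq Nq _]] := process a1 Ha M HL.
  exists q; split => //; split; last by rewrite size_iota in Fq.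
  apply: make_coherent => // i Hi.
  have [->|i2] : i = 1%N \/ (2 <= i)%N by lia.
    exact: one_not_both a1 Ha Mq.
  by apply: Nq; rewrite mem_iota; lia.
split; first exact: extremal_mono.
move=> q k Mq Cq F.
have := mu_fw F.
have -> : mu n q = 0%N.
  rewrite /mu (eq_in_count (a2 := pred0)) ?count_pred0 //.
  move=> i; rewrite mem_iota => Hi /=; apply/negbTE.
  by apply: coh_not_both a1 Ha Mq Cq _; lia.
have -> : mu n (extremal_path n) = (n - 2)%N.
  rewrite /mu (eq_in_count (a2 := predT)) ?count_predT ?size_iota //.
  move=> i; rewrite mem_iota => Hi /=; apply/andP; split; rewrite /extremal_path mem_cat.
    apply/orP; left; apply/mapP; exists (n - i)%N; first by rewrite mem_iota; lia.
    congr (_, _); lia.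
  apply/orP; right; apply/mapP; exists i => //; rewrite mem_iota; lia.
by rewrite add0n.
Qed.
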